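(* Up to multiplication by a positive integer, every basic weight of a basic system of type $F_4$ is one of the following (coordinates $\lambda_k=\langle\lambda,e_k\rangle$): (1) $(F_4,2,2)$: $(2,0,-1,1)$, $(1,0,-2,1)$, $(0,-1,-2,1)$; (2) $(F_4,2,3)$: $(\tfrac32,\tfrac12,-\tfrac12,\tfrac12)$, $(1,0,-1,1)$, $(\tfrac12,\tfrac12,-\tfrac32,\tfrac12)$, $(\tfrac12,-\tfrac12,-\tfrac32,\tfrac12)$, $(-\tfrac12,-\tfrac12,-\tfrac32,\tfrac12)$; (3) $(F_4,3,2)$: $(2,1,0,-1)$, $(1,1,0,-2)$, $(1,0,-1,-2)$, $(0,1,-1,-2)$, $(-1,0,-1,-2)$; (4) $(F_4,3,3)$: $(1,1,0,-1)$, $(\tfrac12,\tfrac12,-\tfrac12,-\tfrac32)$, $(-\tfrac12,\tfrac12,-\tfrac12,-\tfrac32)$.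
   Context: $F_4$ is realized in $\mathbb R^4$ with orthonormal basis $e_1,\dots,e_4$ and standard inner product, simple roots $\alpha_1=e_2-e_3$, $\alpha_2=e_3-e_4$, $\alpha_3=e_4$, $\alpha_4=\tfrac12(e_1-e_2-e_3-e_4)$. Let $W$ be the Weyl group, $\alpha^\vee=2\alpha/\langle\alpha,\alpha\rangle$. A weight is integral if $\langle\lambda,\alpha^\vee\rangle\in\mathbb Z$ for all roots $\alpha$; $\overline\lambda$ is the dominant weight in $W\lambda$. For $I=\Delta\setminus\{\alpha_i\}$, $J=\Delta\setminus\{\alpha_j\}$, a basic weight of $(\Phi,i,j)$ is an integral $\lambda$ with $\langle\lambda,\alpha^\vee\rangle\in\mathbb Z_{>0}$ for all $\alpha\in I$ and $\{\alpha\in\Delta:\langle\overline\lambda,\alpha\rangle=0\}=J$; $(\Phi,i,j)$ is a basic system if it has a basic weight. *)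

(* Defs.v *)
(* F_4 realised in R^4 (R any real field), vectors as 'rV[R]_4;
   coordinate e_{k+1} is the column index k : 'I_4. *)
From HB Require Import structures.
From mathcomp Require Import all_boot all_order all_algebra.
Set Implicit Arguments. Unset Strict Implicit. Unset Printing Implicit Defensive.
Import Order.TTheory GRing.Theory Num.Theory.
Local Open Scope ring_scope.

Section F4.
Variable R : realFieldType.
Notation vec := 'rV[R]_4.

Definition v4 (a b c d : R) : vec := \row_(k < 4) nth 0 [:: a; b; c; d] k.

Definition evec (k : 'I_4) : vec := \row_(l < 4) (k == l)%:R.

Definition ip (u v : vec) : R := \sum_(k < 4) u 0 k * v 0 k.

Definition F4_root (v : vec) : Prop :=
  (exists (i : 'I_4) (s : bool), v = (-1) ^+ s *: evec i) \/
  (exists (i j : 'I_4) (s t : bool),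
      (i < j)%N /\ v = (-1) ^+ s *: evec i + (-1) ^+ t *: evec j) \/
  (exists f : 'I_4 -> bool, v = \row_(k < 4) ((-1) ^+ f k / 2)).

Definition coroot (a : vec) : vec := (2 / ip a a) *: a.

Definition simple_root (k : nat) : vec :=
  match k with
  | 1 => v4 0 1 (-1) 0
  | 2 => v4 0 0 1 (-1)
  | 3 => v4 0 0 0 1
  | _ => v4 (1/2) (-1/2) (-1/2) (-1/2)
  end.

Definition refl (a v : vec) : vec := v - ip v (coroot a) *: a.

(* mu lies in the Weyl group orbit W lam: W is generated by the reflections
   s_alpha, alpha a root *)
Definition in_W_orbit (lam mu : vec) : Prop :=
  exists s : seq vec, (forall a, a \in s -> F4_root a) /\ mu = foldr refl lam s.

Definition dominant (mu : vec) : Prop :=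
  forall k, (1 <= k <= 4)%N -> 0 <= ip mu (simple_root k).

Definition integral (lam : vec) : Prop :=
  forall a, F4_root a -> exists z : int, ip lam (coroot a) = z%:~R.

Definition basic_weight (i j : nat) (lam : vec) : Prop :=
  integral lam /\
  (forall k, (1 <= k <= 4)%N -> k != i -> 0 < ip lam (coroot (simple_root k))) /\
  (exists mu, in_W_orbit lam mu /\ dominant mu /\
     forall k, (1 <= k <= 4)%N -> (ip mu (simple_root k) = 0 <-> k != j)).

Definition F4_basic_list (i j : nat) : seq vec :=
  match i, j with
  | 2, 2 => [:: v4 2 0 (-1) 1; v4 1 0 (-2) 1; v4 0 (-1) (-2) 1]
  | 2, 3 => [:: v4 (3/2) (1/2) (-1/2) (1/2); v4 1 0 (-1) 1;
               v4 (1/2) (1/2) (-3/2) (1/2); v4 (1/2) (-1/2) (-3/2) (1/2);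
               v4 (-1/2) (-1/2) (-3/2) (1/2)]
  | 3, 2 => [:: v4 2 1 0 (-1); v4 1 1 0 (-2); v4 1 0 (-1) (-2);
               v4 0 1 (-1) (-2); v4 (-1) 0 (-1) (-2)]
  | 3, 3 => [:: v4 1 1 0 (-1); v4 (1/2) (1/2) (-1/2) (-3/2);
               v4 (-1/2) (1/2) (-1/2) (-3/2)]
  | _, _ => [::]
  end.

End F4.

(* Main.v *)
Require Import Defs.
From HB Require Import structures.
From mathcomp Require Import all_boot all_order all_algebra.
From mathcomp Require Import ring lra.
Import Order.TTheory GRing.Theory Num.Theory.
Local Open Scope ring_scope.

Definition qip (p q : seq rat) : rat :=
  p`_0 * q`_0 + p`_1 * q`_1 + p`_2 * q`_2 + p`_3 * q`_3.
Definition qcoroot (a : seq rat) : seq rat :=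
  [seq (2 / qip a a) * a`_k | k <- iota 0 4].
Definition qrefl (a v : seq rat) : seq rat :=
  [seq v`_k - qip v (qcoroot a) * a`_k | k <- iota 0 4].
Definition qf1 (i : nat) (s : bool) : seq rat :=
  [seq (-1) ^+ s * (i == k)%:R | k <- iota 0 4].
Definition qf2 (i j : nat) (s t : bool) : seq rat :=
  [seq (-1) ^+ s * (i == k)%:R + (-1) ^+ t * (j == k)%:R | k <- iota 0 4].
Definition qf3 (b0 b1 b2 b3 : bool) : seq rat :=
  [:: (-1) ^+ b0 / 2; (-1) ^+ b1 / 2; (-1) ^+ b2 / 2; (-1) ^+ b3 / 2].
Definition bools := [:: true; false].
Definition pairs4 := [:: (0,1); (0,2); (0,3); (1,2); (1,3); (2,3)]%N.
Definition params : seq (nat * nat * bool * bool) :=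
  [:: (0,1,true,true); (0,1,true,false); (0,1,false,true); (0,1,false,false); (0,2,true,true); (0,2,true,false); (0,2,false,true); (0,2,false,false); (0,3,true,true); (0,3,true,false); (0,3,false,true); (0,3,false,false); (1,2,true,true); (1,2,true,false); (1,2,false,true); (1,2,false,false); (1,3,true,true); (1,3,true,false); (1,3,false,true); (1,3,false,false); (2,3,true,true); (2,3,true,false); (2,3,false,true); (2,3,false,false)]%N.
Definition roots48 : seq (seq rat) :=
  [seq qf1 i s | i <- iota 0 4, s <- bools] ++
  [seq qf2 p.1.1.1 p.1.1.2 p.1.2 p.2 | p <- params] ++
  flatten (flatten (flatten [seq [seq [seq [seq qf3 b0 b1 b2 b3 | b3 <- bools] | b2 <- bools] | b1 <- bools] | b0 <- bools])).
Definition orb1 : seq (seq rat) := [:: [:: (-1); (-1); 0; 0];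
  [:: (-1); 0; (-1); 0];
  [:: (-1); 0; 0; (-1)];
  [:: (-1); 0; 0; 1];
  [:: (-1); 0; 1; 0];
  [:: (-1); 1; 0; 0];
  [:: 0; (-1); (-1); 0];
  [:: 0; (-1); 0; (-1)];
  [:: 0; (-1); 0; 1];
  [:: 0; (-1); 1; 0];
  [:: 0; 0; (-1); (-1)];
  [:: 0; 0; (-1); 1];
  [:: 0; 0; 1; (-1)];
  [:: 0; 0; 1; 1];
  [:: 0; 1; (-1); 0];
  [:: 0; 1; 0; (-1)];
  [:: 0; 1; 0; 1];
  [:: 0; 1; 1; 0];
  [:: 1; (-1); 0; 0];
  [:: 1; 0; (-1); 0];
  [:: 1; 0; 0; (-1)];
  [:: 1; 0; 0; 1];
  [:: 1; 0; 1; 0];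
  [:: 1; 1; 0; 0]].
Definition orb2 : seq (seq rat) := [:: [:: (-2); (-1); (-1); 0];
  [:: (-2); (-1); 0; (-1)];
  [:: (-2); (-1); 0; 1];
  [:: (-2); (-1); 1; 0];
  [:: (-2); 0; (-1); (-1)];
  [:: (-2); 0; (-1); 1];
  [:: (-2); 0; 1; (-1)];
  [:: (-2); 0; 1; 1];
  [:: (-2); 1; (-1); 0];
  [:: (-2); 1; 0; (-1)];
  [:: (-2); 1; 0; 1];
  [:: (-2); 1; 1; 0];
  [:: (-1); (-2); (-1); 0];
  [:: (-1); (-2); 0; (-1)];
  [:: (-1); (-2); 0; 1];
  [:: (-1); (-2); 1; 0];
  [:: (-1); (-1); (-2); 0];
  [:: (-1); (-1); 0; (-2)];
  [:: (-1); (-1); 0; 2];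
  [:: (-1); (-1); 2; 0];
  [:: (-1); 0; (-2); (-1)];
  [:: (-1); 0; (-2); 1];
  [:: (-1); 0; (-1); (-2)];
  [:: (-1); 0; (-1); 2];
  [:: (-1); 0; 1; (-2)];
  [:: (-1); 0; 1; 2];
  [:: (-1); 0; 2; (-1)];
  [:: (-1); 0; 2; 1];
  [:: (-1); 1; (-2); 0];
  [:: (-1); 1; 0; (-2)];
  [:: (-1); 1; 0; 2];
  [:: (-1); 1; 2; 0];
  [:: (-1); 2; (-1); 0];
  [:: (-1); 2; 0; (-1)];
  [:: (-1); 2; 0; 1];
  [:: (-1); 2; 1; 0];
  [:: 0; (-2); (-1); (-1)];
  [:: 0; (-2); (-1); 1];
  [:: 0; (-2); 1; (-1)];
  [:: 0; (-2); 1; 1];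
  [:: 0; (-1); (-2); (-1)];
  [:: 0; (-1); (-2); 1];
  [:: 0; (-1); (-1); (-2)];
  [:: 0; (-1); (-1); 2];
  [:: 0; (-1); 1; (-2)];
  [:: 0; (-1); 1; 2];
  [:: 0; (-1); 2; (-1)];
  [:: 0; (-1); 2; 1];
  [:: 0; 1; (-2); (-1)];
  [:: 0; 1; (-2); 1];
  [:: 0; 1; (-1); (-2)];
  [:: 0; 1; (-1); 2];
  [:: 0; 1; 1; (-2)];
  [:: 0; 1; 1; 2];
  [:: 0; 1; 2; (-1)];
  [:: 0; 1; 2; 1];
  [:: 0; 2; (-1); (-1)];
  [:: 0; 2; (-1); 1];
  [:: 0; 2; 1; (-1)];
  [:: 0; 2; 1; 1];
  [:: 1; (-2); (-1); 0];
  [:: 1; (-2); 0; (-1)];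
  [:: 1; (-2); 0; 1];
  [:: 1; (-2); 1; 0];
  [:: 1; (-1); (-2); 0];
  [:: 1; (-1); 0; (-2)];
  [:: 1; (-1); 0; 2];
  [:: 1; (-1); 2; 0];
  [:: 1; 0; (-2); (-1)];
  [:: 1; 0; (-2); 1];
  [:: 1; 0; (-1); (-2)];
  [:: 1; 0; (-1); 2];
  [:: 1; 0; 1; (-2)];
  [:: 1; 0; 1; 2];
  [:: 1; 0; 2; (-1)];
  [:: 1; 0; 2; 1];
  [:: 1; 1; (-2); 0];
  [:: 1; 1; 0; (-2)];
  [:: 1; 1; 0; 2];
  [:: 1; 1; 2; 0];
  [:: 1; 2; (-1); 0];
  [:: 1; 2; 0; (-1)];
  [:: 1; 2; 0; 1];
  [:: 1; 2; 1; 0];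
  [:: 2; (-1); (-1); 0];
  [:: 2; (-1); 0; (-1)];
  [:: 2; (-1); 0; 1];
  [:: 2; (-1); 1; 0];
  [:: 2; 0; (-1); (-1)];
  [:: 2; 0; (-1); 1];
  [:: 2; 0; 1; (-1)];
  [:: 2; 0; 1; 1];
  [:: 2; 1; (-1); 0];
  [:: 2; 1; 0; (-1)];
  [:: 2; 1; 0; 1];
  [:: 2; 1; 1; 0]].
Definition orb3 : seq (seq rat) := [:: [:: ((-3)/2); ((-1)/2); ((-1)/2); ((-1)/2)];
  [:: ((-3)/2); ((-1)/2); ((-1)/2); (1/2)];
  [:: ((-3)/2); ((-1)/2); (1/2); ((-1)/2)];
  [:: ((-3)/2); ((-1)/2); (1/2); (1/2)];
  [:: ((-3)/2); (1/2); ((-1)/2); ((-1)/2)];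
  [:: ((-3)/2); (1/2); ((-1)/2); (1/2)];
  [:: ((-3)/2); (1/2); (1/2); ((-1)/2)];
  [:: ((-3)/2); (1/2); (1/2); (1/2)];
  [:: (-1); (-1); (-1); 0];
  [:: (-1); (-1); 0; (-1)];
  [:: (-1); (-1); 0; 1];
  [:: (-1); (-1); 1; 0];
  [:: (-1); 0; (-1); (-1)];
  [:: (-1); 0; (-1); 1];
  [:: (-1); 0; 1; (-1)];
  [:: (-1); 0; 1; 1];
  [:: (-1); 1; (-1); 0];
  [:: (-1); 1; 0; (-1)];
  [:: (-1); 1; 0; 1];
  [:: (-1); 1; 1; 0];
  [:: ((-1)/2); ((-3)/2); ((-1)/2); ((-1)/2)];
  [:: ((-1)/2); ((-3)/2); ((-1)/2); (1/2)];
  [:: ((-1)/2); ((-3)/2); (1/2); ((-1)/2)];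
  [:: ((-1)/2); ((-3)/2); (1/2); (1/2)];
  [:: ((-1)/2); ((-1)/2); ((-3)/2); ((-1)/2)];
  [:: ((-1)/2); ((-1)/2); ((-3)/2); (1/2)];
  [:: ((-1)/2); ((-1)/2); ((-1)/2); ((-3)/2)];
  [:: ((-1)/2); ((-1)/2); ((-1)/2); (3/2)];
  [:: ((-1)/2); ((-1)/2); (1/2); ((-3)/2)];
  [:: ((-1)/2); ((-1)/2); (1/2); (3/2)];
  [:: ((-1)/2); ((-1)/2); (3/2); ((-1)/2)];
  [:: ((-1)/2); ((-1)/2); (3/2); (1/2)];
  [:: ((-1)/2); (1/2); ((-3)/2); ((-1)/2)];
  [:: ((-1)/2); (1/2); ((-3)/2); (1/2)];
  [:: ((-1)/2); (1/2); ((-1)/2); ((-3)/2)];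
  [:: ((-1)/2); (1/2); ((-1)/2); (3/2)];
  [:: ((-1)/2); (1/2); (1/2); ((-3)/2)];
  [:: ((-1)/2); (1/2); (1/2); (3/2)];
  [:: ((-1)/2); (1/2); (3/2); ((-1)/2)];
  [:: ((-1)/2); (1/2); (3/2); (1/2)];
  [:: ((-1)/2); (3/2); ((-1)/2); ((-1)/2)];
  [:: ((-1)/2); (3/2); ((-1)/2); (1/2)];
  [:: ((-1)/2); (3/2); (1/2); ((-1)/2)];
  [:: ((-1)/2); (3/2); (1/2); (1/2)];
  [:: 0; (-1); (-1); (-1)];
  [:: 0; (-1); (-1); 1];
  [:: 0; (-1); 1; (-1)];
  [:: 0; (-1); 1; 1];
  [:: 0; 1; (-1); (-1)];
  [:: 0; 1; (-1); 1];
  [:: 0; 1; 1; (-1)];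
  [:: 0; 1; 1; 1];
  [:: (1/2); ((-3)/2); ((-1)/2); ((-1)/2)];
  [:: (1/2); ((-3)/2); ((-1)/2); (1/2)];
  [:: (1/2); ((-3)/2); (1/2); ((-1)/2)];
  [:: (1/2); ((-3)/2); (1/2); (1/2)];
  [:: (1/2); ((-1)/2); ((-3)/2); ((-1)/2)];
  [:: (1/2); ((-1)/2); ((-3)/2); (1/2)];
  [:: (1/2); ((-1)/2); ((-1)/2); ((-3)/2)];
  [:: (1/2); ((-1)/2); ((-1)/2); (3/2)];
  [:: (1/2); ((-1)/2); (1/2); ((-3)/2)];
  [:: (1/2); ((-1)/2); (1/2); (3/2)];
  [:: (1/2); ((-1)/2); (3/2); ((-1)/2)];
  [:: (1/2); ((-1)/2); (3/2); (1/2)];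
  [:: (1/2); (1/2); ((-3)/2); ((-1)/2)];
  [:: (1/2); (1/2); ((-3)/2); (1/2)];
  [:: (1/2); (1/2); ((-1)/2); ((-3)/2)];
  [:: (1/2); (1/2); ((-1)/2); (3/2)];
  [:: (1/2); (1/2); (1/2); ((-3)/2)];
  [:: (1/2); (1/2); (1/2); (3/2)];
  [:: (1/2); (1/2); (3/2); ((-1)/2)];
  [:: (1/2); (1/2); (3/2); (1/2)];
  [:: (1/2); (3/2); ((-1)/2); ((-1)/2)];
  [:: (1/2); (3/2); ((-1)/2); (1/2)];
  [:: (1/2); (3/2); (1/2); ((-1)/2)];
  [:: (1/2); (3/2); (1/2); (1/2)];
  [:: 1; (-1); (-1); 0];
  [:: 1; (-1); 0; (-1)];
  [:: 1; (-1); 0; 1];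
  [:: 1; (-1); 1; 0];
  [:: 1; 0; (-1); (-1)];
  [:: 1; 0; (-1); 1];
  [:: 1; 0; 1; (-1)];
  [:: 1; 0; 1; 1];
  [:: 1; 1; (-1); 0];
  [:: 1; 1; 0; (-1)];
  [:: 1; 1; 0; 1];
  [:: 1; 1; 1; 0];
  [:: (3/2); ((-1)/2); ((-1)/2); ((-1)/2)];
  [:: (3/2); ((-1)/2); ((-1)/2); (1/2)];
  [:: (3/2); ((-1)/2); (1/2); ((-1)/2)];
  [:: (3/2); ((-1)/2); (1/2); (1/2)];
  [:: (3/2); (1/2); ((-1)/2); ((-1)/2)];
  [:: (3/2); (1/2); ((-1)/2); (1/2)];
  [:: (3/2); (1/2); (1/2); ((-1)/2)];
  [:: (3/2); (1/2); (1/2); (1/2)]].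
Definition orb4 : seq (seq rat) := [:: [:: (-1); 0; 0; 0];
  [:: ((-1)/2); ((-1)/2); ((-1)/2); ((-1)/2)];
  [:: ((-1)/2); ((-1)/2); ((-1)/2); (1/2)];
  [:: ((-1)/2); ((-1)/2); (1/2); ((-1)/2)];
  [:: ((-1)/2); ((-1)/2); (1/2); (1/2)];
  [:: ((-1)/2); (1/2); ((-1)/2); ((-1)/2)];
  [:: ((-1)/2); (1/2); ((-1)/2); (1/2)];
  [:: ((-1)/2); (1/2); (1/2); ((-1)/2)];
  [:: ((-1)/2); (1/2); (1/2); (1/2)];
  [:: 0; (-1); 0; 0];
  [:: 0; 0; (-1); 0];
  [:: 0; 0; 0; (-1)];
  [:: 0; 0; 0; 1];
  [:: 0; 0; 1; 0];
  [:: 0; 1; 0; 0];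
  [:: (1/2); ((-1)/2); ((-1)/2); ((-1)/2)];
  [:: (1/2); ((-1)/2); ((-1)/2); (1/2)];
  [:: (1/2); ((-1)/2); (1/2); ((-1)/2)];
  [:: (1/2); ((-1)/2); (1/2); (1/2)];
  [:: (1/2); (1/2); ((-1)/2); ((-1)/2)];
  [:: (1/2); (1/2); ((-1)/2); (1/2)];
  [:: (1/2); (1/2); (1/2); ((-1)/2)];
  [:: (1/2); (1/2); (1/2); (1/2)];
  [:: 1; 0; 0; 0]].
Definition orb (j : nat) : seq (seq rat) :=
  match j with 1 => orb1 | 2 => orb2 | 3 => orb3 | 4 => orb4 | _ => [::] end%N.

Lemma roots48_size : size roots48 = 48%N. Proof. vm_compute. reflexivity. Qed.
Lemma orb_closed : all (fun j => all (fun a => all (fun q => qrefl a q \in orb j) (orb j)) roots48) (iota 1 4).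
Proof. vm_compute. reflexivity. Qed.

Definition qsimple (k : nat) : seq rat :=
  match k with
  | 1 => [:: 0; 1; -1; 0]
  | 2 => [:: 0; 0; 1; -1]
  | 3 => [:: 0; 0; 0; 1]
  | _ => [:: 1/2; -1/2; -1/2; -1/2]
  end.
Definition posb (i : nat) (q : seq rat) : bool :=
  all (fun k => (k == i) || (0 < qip q (qcoroot (qsimple k)))) (iota 1 4).
Definition LQ (i j : nat) : seq (seq rat) :=
  match i, j with
  | 2, 2 => [:: [:: 2; 0; -1; 1]; [:: 1; 0; -2; 1]; [:: 0; -1; -2; 1]]
  | 2, 3 => [:: [:: 3/2; 1/2; -1/2; 1/2]; [:: 1; 0; -1; 1];
               [:: 1/2; 1/2; -3/2; 1/2]; [:: 1/2; -1/2; -3/2; 1/2];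
               [:: -1/2; -1/2; -3/2; 1/2]]
  | 3, 2 => [:: [:: 2; 1; 0; -1]; [:: 1; 1; 0; -2]; [:: 1; 0; -1; -2];
               [:: 0; 1; -1; -2]; [:: -1; 0; -1; -2]]
  | 3, 3 => [:: [:: 1; 1; 0; -1]; [:: 1/2; 1/2; -1/2; -3/2];
               [:: -1/2; 1/2; -1/2; -3/2]]
  | _, _ => [::]
  end.

Lemma filter_ok : all (fun i => all (fun j =>
   all (fun q => posb i q ==> (q \in LQ i j)) (orb j)) (iota 1 4)) (iota 1 4).
Proof. vm_compute. reflexivity. Qed.

Lemma wit_ok : all (fun i => all (fun j =>
   all (fun q => has (fun p => qip q (qcoroot (qf2 p.1.1.1 p.1.1.2 p.1.2 p.2)) == 1) params) (LQ i j)) (iota 1 4)) (iota 1 4).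
Proof. vm_compute. reflexivity. Qed.

Lemma params_ok : all (fun p => (p.1.1.1 < p.1.1.2 < 4)%N) params.
Proof. by []. Qed.

Lemma roots_nz : all (fun a => qip a a != 0) roots48.
Proof. vm_compute. reflexivity. Qed.

Lemma qf1_in : all (fun i => all (fun s => qf1 i s \in roots48) bools) (iota 0 4).
Proof. vm_compute. reflexivity. Qed.
Lemma qf2_in : all (fun i => all (fun j => all (fun s => all (fun t =>
   (i < j)%N ==> (qf2 i j s t \in roots48)) bools) bools) (iota 0 4)) (iota 0 4).
Proof. vm_compute. reflexivity. Qed.
Lemma qf3_in : all (fun b0 => all (fun b1 => all (fun b2 => all (fun b3 =>
   qf3 b0 b1 b2 b3 \in roots48) bools) bools) bools) bools.
Proof. vm_compute. reflexivity. Qed.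

Definition omega (j : nat) : seq rat :=
  match j with
  | 1 => [:: 1; 1; 0; 0]
  | 2 => [:: 2; 1; 1; 0]
  | 3 => [:: 3/2; 1/2; 1/2; 1/2]
  | _ => [:: 1; 0; 0; 0]
  end.
Lemma omega_in : all (fun j => omega j \in orb j) (iota 1 4).
Proof. vm_compute. reflexivity. Qed.

Section RPart.
Variable R : realFieldType.
Notation vec := 'rV[R]_4.
Definition toR (q : seq rat) : vec := \row_(k < 4) ratr q`_k.

Lemma ip_toR p q : ip (toR p) (toR q) = ratr (qip p q).
Proof.
rewrite /ip !big_ord_recr big_ord0 /= !mxE /qip !rmorphD !rmorphM add0r //.
Qed.

Lemma coroot_toR a : coroot (toR a) = toR (qcoroot a).
Proof.
rewrite /coroot ip_toR; apply/rowP => k; rewrite !mxE (nth_map 0%N) ?size_iota //.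
by rewrite nth_iota // add0n rmorphM fmorph_div rmorph_nat.
Qed.

Lemma refl_toR a v : refl (toR a) (toR v) = toR (qrefl a v).
Proof.
rewrite /refl coroot_toR ip_toR; apply/rowP => k; rewrite !mxE (nth_map 0%N) ?size_iota //.
by rewrite nth_iota // add0n rmorphB rmorphM.
Qed.

Lemma ipZl c (u v : vec) : ip (c *: u) v = c * ip u v.
Proof. rewrite /ip mulr_sumr; apply: eq_bigr => k _; by rewrite mxE mulrA. Qed.

Lemma ipZr c (u v : vec) : ip u (c *: v) = c * ip u v.
Proof. rewrite /ip mulr_sumr; apply: eq_bigr => k _; rewrite mxE; ring. Qed.

Lemma ipBl (u w z : vec) k : ip (u - k *: w) z = ip u z - k * ip w z.
Proof.
rewrite /ip mulr_sumr -sumrB; apply: eq_bigr => m _; rewrite !mxE; ring.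
Qed.

Lemma reflZ (a : vec) c v : refl a (c *: v) = c *: refl a v.
Proof. by rewrite /refl ipZl scalerBr scalerA. Qed.

Lemma refl_invol (a v : vec) : ip a a != 0 -> refl a (refl a v) = v.
Proof.
move=> nz; rewrite {1}/refl ipBl.
have -> : ip a (coroot a) = 2 by rewrite /coroot ipZr divfK.
rewrite /refl; set k := ip v (coroot a).
rewrite (_ : k - k * 2 = - k); last by ring.
by rewrite scaleNr opprK subrK.
Qed.

Lemma toR_v4 a b c d : toR [:: a; b; c; d] = v4 (ratr a) (ratr b) (ratr c) (ratr d).
Proof. by apply/rowP => k; rewrite !mxE; case: k => [[|[|[|[|//]]]] Hk]. Qed.

Lemma qf1_toR (i : 'I_4) (s : bool) : (-1) ^+ s *: evec R i = toR (qf1 i s).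
Proof.
apply/rowP => k; rewrite !mxE (nth_map 0%N) ?size_iota // nth_iota // add0n.
by rewrite rmorphM rmorph_sign rmorph_nat.
Qed.

Lemma qf2_toR (i j : 'I_4) (s t : bool) :
  (-1) ^+ s *: evec R i + (-1) ^+ t *: evec R j = toR (qf2 i j s t).
Proof.
apply/rowP => k; rewrite !mxE (nth_map 0%N) ?size_iota // nth_iota // add0n.
by rewrite rmorphD !rmorphM !rmorph_sign !rmorph_nat.
Qed.

Lemma qf3_toR (f : 'I_4 -> bool) :
  \row_(k < 4) ((-1) ^+ f k / 2) =
  toR (qf3 (f (inord 0)) (f (inord 1)) (f (inord 2)) (f (inord 3))) :> vec.
Proof.
apply/rowP => k; rewrite !mxE.
have E : forall n (Hn : (n < 4)%N), f (Ordinal Hn) = f (inord n).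
  by move=> n Hn; congr f; apply: val_inj; rewrite /= inordK.
case: k => [[|[|[|[|//]]]] Hk]; by rewrite /= fmorph_div rmorph_sign rmorph_nat E.
Qed.

Lemma allin {T : eqType} {p : pred T} {s : seq T} {x} : all p s -> x \in s -> p x.
Proof. by move/allP; apply. Qed.

Lemma inb (b : bool) : b \in bools. Proof. by case: b. Qed.
Lemma ini (i : 'I_4) : (i : nat) \in iota 0 4. Proof. by rewrite mem_iota ltn_ord. Qed.

Lemma root_toR (a : vec) : F4_root a -> exists2 a', a' \in roots48 & a = toR a'.
Proof.
case=> [[i [s ->]]|[[i [j [s [t [lij ->]]]]]|[f ->]]].
- exists (qf1 i s); last exact: qf1_toR.
  exact: (allin (allin qf1_in (ini i)) (inb s)).
- exists (qf2 i j s t); last exact: qf2_toR.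
  have := allin (allin (allin (allin qf2_in (ini i)) (ini j)) (inb s)) (inb t).
  by rewrite lij.
- eexists; last exact: qf3_toR.
  exact: (allin (allin (allin (allin qf3_in (inb _)) (inb _)) (inb _)) (inb _)).
Qed.

Definition inS (j : nat) (c : R) (v : vec) := exists2 q, q \in orb j & v = c *: toR q.

Lemma inS_refl j c a v : (1 <= j <= 4)%N -> F4_root a -> inS j c (refl a v) -> inS j c v.
Proof.
move=> hj /root_toR [a' ha' ->] [q hq e].
have nz : ip (toR a') (toR a') != 0.
  by rewrite ip_toR fmorph_eq0; exact: (allin roots_nz ha').
rewrite -(refl_invol (toR a') v nz) e reflZ refl_toR.
exists (qrefl a' q) => //.
have hj' : j \in iota 1 4 by rewrite mem_iota.
exact: (allin (allin (allin orb_closed hj') ha') hq).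
Qed.

Lemma inS_fold j c s lam : (1 <= j <= 4)%N -> (forall a, a \in s -> F4_root a) ->
  inS j c (foldr (@refl R) lam s) -> inS j c lam.
Proof.
move=> hj; elim: s => [//|a s IH] hs /= h.
apply: IH; first by move=> b hb; apply: hs; rewrite inE hb orbT.
apply: inS_refl h => //; apply: hs; exact: mem_head.
Qed.

Lemma v4_eta (u : vec) :
  u = v4 (u 0 (inord 0)) (u 0 (inord 1)) (u 0 (inord 2)) (u 0 (inord 3)).
Proof.
apply/rowP => k; rewrite !mxE.
case: k => [[|[|[|[|//]]]] Hk] /=; congr (u _ _); apply: val_inj; by rewrite /= inordK.
Qed.

Lemma ip_v4 (a b c d a' b' c' d' : R) :
  ip (v4 a b c d) (v4 a' b' c' d') = a * a' + b * b' + c * c' + d * d'.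
Proof. by rewrite /ip !big_ord_recr big_ord0 /= !mxE add0r. Qed.

Lemma scale_v4 (x a b c d : R) : x *: v4 a b c d = v4 (x * a) (x * b) (x * c) (x * d).
Proof. by apply/rowP => k; rewrite !mxE; case: k => [[|[|[|[|//]]]] Hk]. Qed.

Lemma simple_root_toR k : simple_root R k = toR (qsimple k).
Proof.
case: k => [|[|[|[|k]]]]; rewrite /= toR_v4;
  by rewrite ?(rmorph0, rmorph1, rmorphN, fmorph_div, rmorph_nat).
Qed.

Lemma LQ_map i j : map toR (LQ i j) = F4_basic_list R i j.
Proof.
case: i => [|[|[|[|i]]]]; case: j => [|[|[|[|j]]]] //=; rewrite !toR_v4;
  by rewrite ?(rmorph0, rmorph1, rmorphN, fmorph_div, rmorph_nat).
Qed.

Lemma dom_inS (j : nat) (mu : vec) : (1 <= j <= 4)%N -> dominant mu ->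
  (forall k, (1 <= k <= 4)%N -> (ip mu (simple_root R k) = 0 <-> k != j)) ->
  exists2 c : R, 0 < c & inS j c mu.
Proof.
move=> hj hd hz; rewrite (v4_eta mu) in hd hz *.
move: (mu 0 (inord 0)) (mu 0 (inord 1)) (mu 0 (inord 2)) (mu 0 (inord 3)) hd hz
  => m0 m1 m2 m3 hd hz.
have hd1 := hd 1%N isT; have hd2 := hd 2%N isT; have hd3 := hd 3%N isT; have hd4 := hd 4%N isT.
have hz1 := hz 1%N isT; have hz2 := hz 2%N isT; have hz3 := hz 3%N isT; have hz4 := hz 4%N isT.
move: hd1 hd2 hd3 hd4 hz1 hz2 hz3 hz4; rewrite /simple_root !ip_v4 => hd1 hd2 hd3 hd4 hz1 hz2 hz3 hz4.
clear hz; case: j hj hz1 hz2 hz3 hz4 => [|[|[|[|[|j]]]]] hj hz1 hz2 hz3 hz4; try by [].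
- have e2 := hz2.2 isT; have e3 := hz3.2 isT; have e4 := hz4.2 isT.
  have n1 : m0 * 0 + m1 * 1 + m2 * -1 + m3 * 0 != 0 by apply/eqP => /hz1.1.
  have p1 : 0 < m0 * 0 + m1 * 1 + m2 * -1 + m3 * 0 by rewrite lt_def n1 hd1.
  exists (m0 * 0 + m1 * 1 + m2 * -1 + m3 * 0) => //.
  exists (omega 1); first exact: (allin omega_in (isT : 1%N \in iota 1 4)).
  rewrite /omega toR_v4 ?(rmorph0, rmorph1, rmorphN, fmorph_div, rmorph_nat) scale_v4.
  congr v4; lra.
- have e1 := hz1.2 isT; have e3 := hz3.2 isT; have e4 := hz4.2 isT.
  have n1 : m0 * 0 + m1 * 0 + m2 * 1 + m3 * -1 != 0 by apply/eqP => /hz2.1.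
  have p1 : 0 < m0 * 0 + m1 * 0 + m2 * 1 + m3 * -1 by rewrite lt_def n1 hd2.
  exists (m0 * 0 + m1 * 0 + m2 * 1 + m3 * -1) => //.
  exists (omega 2); first exact: (allin omega_in (isT : 2%N \in iota 1 4)).
  rewrite /omega toR_v4 ?(rmorph0, rmorph1, rmorphN, fmorph_div, rmorph_nat) scale_v4.
  congr v4; lra.
- have e1 := hz1.2 isT; have e2 := hz2.2 isT; have e4 := hz4.2 isT.
  have n1 : m0 * 0 + m1 * 0 + m2 * 0 + m3 * 1 != 0 by apply/eqP => /hz3.1.
  have p1 : 0 < m0 * 0 + m1 * 0 + m2 * 0 + m3 * 1 by rewrite lt_def n1 hd3.
  exists (2 * (m0 * 0 + m1 * 0 + m2 * 0 + m3 * 1)); first lra.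
  exists (omega 3); first exact: (allin omega_in (isT : 3%N \in iota 1 4)).
  rewrite /omega toR_v4 ?(rmorph0, rmorph1, rmorphN, fmorph_div, rmorph_nat) scale_v4.
  congr v4; lra.
- have e1 := hz1.2 isT; have e2 := hz2.2 isT; have e3 := hz3.2 isT.
  have n1 : m0 * (1/2) + m1 * (-1/2) + m2 * (-1/2) + m3 * (-1/2) != 0 by apply/eqP => /hz4.1.
  have p1 : 0 < m0 * (1/2) + m1 * (-1/2) + m2 * (-1/2) + m3 * (-1/2) by rewrite lt_def n1 hd4.
  exists (2 * (m0 * (1/2) + m1 * (-1/2) + m2 * (-1/2) + m3 * (-1/2))); first lra.
  exists (omega 4); first exact: (allin omega_in (isT : 4%N \in iota 1 4)).
  rewrite /omega toR_v4 ?(rmorph0, rmorph1, rmorphN, fmorph_div, rmorph_nat) scale_v4.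
  congr v4; lra.
Qed.


Lemma main_R (i j : nat) (lam : vec) :
  (1 <= i <= 4)%N -> (1 <= j <= 4)%N ->
  basic_weight i j lam ->
  exists (n : nat) (mu : vec),
    (0 < n)%N /\ mu \in F4_basic_list R i j /\ lam = n%:R *: mu.
Proof.
move=> hi hj [hint [hpos [mu [[s [hs hmu]] [hdom hz]]]]].
have [c c0 hS] := dom_inS j mu hj hdom hz.
rewrite hmu in hS.
have [q hq hlam] := inS_fold j c s lam hj hs hS.
have hp : posb i q.
  apply/allP => k; rewrite mem_iota => hk.
  case: eqP => [//|/eqP hki] /=.
  have := hpos k hk hki.
  by rewrite hlam ipZl simple_root_toR coroot_toR ip_toR pmulr_rgt0 // ltr0q.
have hi' : i \in iota 1 4 by rewrite mem_iota.
have hj' : j \in iota 1 4 by rewrite mem_iota.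
have hqL : q \in LQ i j.
  by have := allin (allin (allin filter_ok hi') hj') hq; rewrite hp.
have := allin (allin (allin wit_ok hi') hj') hqL.
case/hasP => [[[[a b] s'] t'] hp1 /eqP hp2].
have /andP [hab hb4] := allin params_ok hp1.
have ha4 : (a < 4)%N by apply: ltn_trans hab hb4.
have hroot : F4_root (toR (qf2 a b s' t')).
  right; left; exists (Ordinal ha4), (Ordinal hb4), s', t'; split => //.
  symmetry; exact: (qf2_toR (Ordinal ha4) (Ordinal hb4) s' t').
have [z hz'] := hint _ hroot.
subst lam.
move: hz'; rewrite ipZl coroot_toR ip_toR hp2 rmorph1 mulr1 => hcz.
subst c.
have [n hn] : exists n : nat, z = n%:Z.
  by clear -c0; case: z c0 => [n|n] c0; [exists n | rewrite ltr0z in c0].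
subst z; rewrite ltr0z in c0.
exists n, (toR q); split; first by [].
split; last by [].
by rewrite -LQ_map; apply: map_f.
Qed.

End RPart.

Theorem theorem5p12 (R : realFieldType) (i j : nat) (lam : 'rV[R]_4) :
  (1 <= i <= 4)%N -> (1 <= j <= 4)%N ->
  basic_weight i j lam ->
  exists (n : nat) (mu : 'rV[R]_4),
    (0 < n)%N /\ mu \in F4_basic_list R i j /\ lam = n%:R *: mu.
Proof. exact: main_R. Qed.
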